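(* Let $0<p\le n$. Let $\mathbf{X}$ be a deterministic $n\times p$ matrix with $\mathbf{X}^T\mathbf{X}=\mathbf{I}_p$, let $\boldsymbol\beta_0=(\beta_1,0,\dots,0)^T$ with $\beta_1\neq0$, let $\mathbf{y}=\mathbf{X}\boldsymbol\beta_0+\boldsymbol\varepsilon$ with $\varepsilon_i$ i.i.d. $N(0,\sigma^2)$, and $\mathbf z=\mathbf X^T\mathbf y$. For $\lambda\ge0$ let $$L_p(\lambda)=\frac1n\Big(\beta_1-\operatorname{sgn}(z_1)(|z_1|-\lambda)_+\Big)^2+\frac1n\sum_{j=2}^p\big((|z_j|-\lambda)_+\big)^2,$$ and $L_p(\lambda_p^* )=\min_{\lambda\ge0}L_p(\lambda)$. If $\operatorname{sgn}(\beta_1)\neq\operatorname{sgn}(z_1)$, then $nL_p(\lambda_p^* )=\beta_1^2$.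
   Context: $(a)_+=\max(a,0)$; $\operatorname{sgn}$ is the sign function. $L_p(\lambda)$ is the $L_2$ loss $\|\mathbf X\boldsymbol\beta_0-\mathbf X\hat{\boldsymbol\beta}_\lambda\|^2/n$ of the Lasso estimate $\hat\beta_{\lambda j}=\operatorname{sgn}(z_j)(|z_j|-\lambda)_+$ under the orthonormal design (for $p=1$ the sum is empty). *)

(* Defs.v *)
From mathcomp Require Import all_boot all_order all_algebra.
Set Implicit Arguments. Unset Strict Implicit. Unset Printing Implicit Defensive.
Import Order.TTheory GRing.Theory Num.Theory.
Local Open Scope ring_scope.

Definition pospart (R : realFieldType) (a : R) : R := Num.max a 0.

(* beta_0 = (beta_1, 0, ..., 0)^T  (index 0 is the paper's index 1) *)
Definition beta0 (R : realFieldType) (p : nat) (b1 : R) : 'cV[R]_p :=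
  \col_(j < p) (if (j : nat) == 0%N then b1 else 0).

Definition Lp (R : realFieldType) (n p : nat) (hp : (0 < p)%N) (b1 : R)
    (z : 'cV[R]_p) (lam : R) : R :=
  let z1 := z (Ordinal hp) 0 in
  n%:R^-1 * (b1 - Num.sg z1 * pospart (`|z1| - lam)) ^+ 2
  + n%:R^-1 * \sum_(j < p | (0 < (j : nat))%N) (pospart (`|z j 0| - lam)) ^+ 2.

(* Main.v *)
Require Import Defs.
From mathcomp Require Import all_boot all_order all_algebra.
Import Order.TTheory GRing.Theory Num.Theory.
From mathcomp Require Import lra.
Local Open Scope ring_scope.

Lemma pos0 (R : realFieldType) (a : R) : a <= 0 -> pospart a = 0.
Proof. by move=> h; rewrite /pospart max_r. Qed.

Lemma posge0 (R : realFieldType) (a : R) : 0 <= pospart a.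
Proof. by rewrite /pospart le_max lexx orbT. Qed.

Theorem lemma2p1 (R : realFieldType) (n p : nat) (hp : (0 < p)%N) (hpn : (p <= n)%N)
    (X : 'M[R]_(n, p)) (hX : X^T *m X = 1%:M) (b1 : R) (hb1 : b1 != 0)
    (eps : 'cV[R]_n) (lamstar : R) :
  let z := X^T *m (X *m beta0 p b1 + eps) in
  Num.sg b1 != Num.sg (z (Ordinal hp) 0) ->
  0 <= lamstar ->
  (forall lam : R, 0 <= lam -> Lp n hp b1 z lamstar <= Lp n hp b1 z lam) ->
  n%:R * Lp n hp b1 z lamstar = b1 ^+ 2.
Proof.
move=> z; move: z => z hsg hl hmin.
have hn : n%:R != 0 :> R by rewrite pnatr_eq0 -lt0n (leq_trans hp hpn).
have nL : forall lam, n%:R * Lp n hp b1 z lam =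
   (b1 - Num.sg (z (Ordinal hp) 0) * pospart (`|z (Ordinal hp) 0| - lam)) ^+ 2
   + \sum_(j < p | (0 < (j : nat))%N) (pospart (`|z j 0| - lam)) ^+ 2.
  by move=> lam; rewrite /Lp mulrDr !mulrA mulfV // !mul1r.
have hbs : b1 * Num.sg (z (Ordinal hp) 0) <= 0.
  move: hsg hb1; case: (ltrgt0P b1) => hb;
  case: (ltrgt0P (z (Ordinal hp) 0)) => hz;
  rewrite ?(gtr0_sg hb) ?(ltr0_sg hb) ?(gtr0_sg hz) ?(ltr0_sg hz) ?hz ?sgr0 ?eqxx //= => _ _;
  rewrite ?mulr0 ?mulr1 ?mulrN1 //; nra.
have low : forall lam, b1 ^+ 2 <= n%:R * Lp n hp b1 z lam.
  move=> lam; rewrite nL.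
  have hq := @posge0 _ (`|z (Ordinal hp) 0| - lam).
  have hs : 0 <= \sum_(j < p | (0 < (j : nat))%N) (pospart (`|z j 0| - lam)) ^+ 2.
    by apply: sumr_ge0 => j _; apply: sqr_ge0.
  set s := Num.sg _ in hbs *; set q := pospart _ in hq *.
  have : b1 * (s * q) <= 0 by rewrite mulrA; apply: mulr_le0_ge0.
  move=> h; nra.
apply: le_anti; rewrite low andbT.
set lam0 := \sum_(j < p) `|z j 0|.
have hl0 : 0 <= lam0 by apply: sumr_ge0 => j _.
have hle : forall j, `|z j 0| <= lam0.
  move=> j; rewrite /lam0 (bigD1 j) //= lerDl; exact: sumr_ge0.
apply: le_trans (_ : n%:R * Lp n hp b1 z lam0 <= _).
  rewrite ler_pM2l ?hmin // lt_def hn /=; exact: ler0n.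
rewrite nL (@pos0 R) ?subr_le0 // mulr0 subr0 big1 ?addr0 //.
by move=> j _; rewrite (@pos0 R) ?subr_le0 // expr0n.
Qed.
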